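(* Let $\varphi(z)\in K(z)$ have degree $d\ge1$, and let $(F,G)$ be a normalized representation of $\varphi$, with $F(X,Y)=\sum_{i=0}^d a_iX^iY^{d-i}$ and $G(X,Y)=\sum_{i=0}^d b_iX^iY^{d-i}$. Then $$\mathrm{GIR}(\varphi)=\max_{i\ne j}\left|\det\begin{pmatrix}a_i&a_j\\ b_i&b_j\end{pmatrix}\right|.$$
   Context: $K$ is a complete, algebraically closed field with a nontrivial nonarchimedean absolute value; $\mathcal O=\{|z|\le1\}$, $\mathcal O^\times$ its units. A normalized representation of $\varphi$ is a pair of homogeneous $F,G\in\mathcal O[X,Y]$ of degree $d$, with no common factor, at least one coefficient in $\mathcal O^\times$, such that $\varphi([X:Y])=[F(X,Y):G(X,Y)]$ (with $z=X/Y$). $\mathbf P^1_{\mathrm{Berk}}$ is the Berkovich projective line over $K$; $\zeta_{a,r}$ is the point corresponding to the disc $D(a,r)=\{z:|z-a|\le r\}$, $\zeta_G=\zeta_{0,1}$. For $x=\zeta_{a,r}$, $r>0$, $\mathrm{diam}_G(x)=r/\max(1,|a|,r)^2$ (equivalently $q^{-\rho(\zeta_G,x)}$ for the logarithmic path metric $\rho$). Gauss Image radius: $\mathrm{GIR}(\varphi)=\mathrm{diam}_G(\varphi(\zeta_G))$. *)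

(* Defs.v *)
From Stdlib Require Import Rdefinitions Raxioms Rfunctions Rbasic_fun.
From HB Require Import structures.
From mathcomp Require Import all_boot all_order all_algebra.
Set Implicit Arguments. Unset Strict Implicit. Unset Printing Implicit Defensive.
Import GRing.Theory.
Local Open Scope ring_scope.
Local Notation "x %:F" := (@FracField.tofrac _ x).

Section Defs.
Variable K : fieldType.
Variable abs : K -> R.

Definition nonarch_abs : Prop :=
  (forall x : K, Rle R0 (abs x)) /\
  (forall x : K, abs x = R0 <-> x = 0) /\
  (forall x y : K, abs (x * y) = Rmult (abs x) (abs y)) /\
  (forall x y : K, Rle (abs (x + y)) (Rmax (abs x) (abs y))).

Definition nontrivial_abs : Prop := exists x : K, abs x <> R0 /\ abs x <> R1.

Definition complete_abs : Prop :=
  forall u : nat -> K,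
    (forall eps, Rlt R0 eps -> exists N : nat, forall m n : nat, (N <= m)%N -> (N <= n)%N ->
        Rlt (abs (u m - u n)) eps) ->
    exists l : K, forall eps, Rlt R0 eps -> exists N : nat, forall n : nat, (N <= n)%N ->
        Rlt (abs (u n - l)) eps.

Definition gauss_norm (p : {poly K}) : R :=
  \big[Rmax/R0]_(i < size p) abs p`_i.

(* zeta_{c,r}(f) = sup_{D(c,r)} |f| = max_i |f_i(c)| r^i  (Taylor coefficients at c) *)
Definition zeta (c : K) (r : R) (f : {poly K}) : R :=
  \big[Rmax/R0]_(i < size f) Rmult (abs (f \Po ('X + c%:P))`_i) (pow r i).

(* the Gauss point zeta_G extended multiplicatively to K(z) *)
Definition gaussF (x : {fraction {poly K}}) : R :=
  Rdiv (gauss_norm (\n_(repr x))) (gauss_norm (\d_(repr x))).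

Definition compose (f : {poly K}) (phi : {fraction {poly K}}) : {fraction {poly K}} :=
  \sum_(i < size f) (f`_i)%:P%:F * phi ^+ i.

(* the seminorm on K[T] of the point phi(zeta_G): f |-> zeta_G(f o phi) *)
Definition push_zetaG (phi : {fraction {poly K}}) (f : {poly K}) : R :=
  gaussF (compose f phi).

Definition rat_degree (phi : {fraction {poly K}}) (d : nat) : Prop :=
  exists p q : {poly K}, q != 0 /\ coprimep p q /\ phi = p%:F / q%:F /\
    (maxn (size p) (size q)).-1 = d.

(* the binary form sum_{i<=d} a_i X^i Y^(d-i), as an element of K[Y][X] *)
Definition form (d : nat) (a : nat -> K) : {poly {poly K}} :=
  \sum_(i < d.+1) ((a i) *: 'X^(d - i))%:P * 'X^i.

Definition dehom (d : nat) (a : nat -> K) : {poly K} :=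
  \sum_(i < d.+1) (a i) *: 'X^i.

Definition no_common_factor (F G : {poly {poly K}}) : Prop :=
  forall H Q1 Q2 : {poly {poly K}}, F = H * Q1 -> G = H * Q2 ->
    exists c : K, H = c%:P%:P.

Definition normalized_rep (d : nat) (a b : nat -> K) (phi : {fraction {poly K}}) : Prop :=
  (forall i, (i <= d)%N -> Rle (abs (a i)) R1 /\ Rle (abs (b i)) R1) /\
  (exists i, (i <= d)%N /\ (abs (a i) = R1 \/ abs (b i) = R1)) /\
  no_common_factor (form d a) (form d b) /\
  phi = (dehom d a)%:F / (dehom d b)%:F.

Definition max_minor (d : nat) (a b : nat -> K) : R :=
  \big[Rmax/R0]_(i < d.+1) \big[Rmax/R0]_(j < d.+1 | i != j)
     abs (a i * b j - a j * b i).

Definition diamG (c : K) (r : R) : R :=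
  Rdiv r (pow (Rmax R1 (Rmax (abs c) r)) 2).
End Defs.

(* Main.v *)
Require Import Defs.
From Stdlib Require Import Rdefinitions Raxioms Rfunctions Rbasic_fun RIneq Lra.
From HB Require Import structures.
From mathcomp Require Import all_boot all_order all_algebra.
From mathcomp Require Import zify.
Import GRing.Theory.
Local Open Scope ring_scope.
Local Notation "x %:F" := (@FracField.tofrac _ x).

Lemma bigmax_ge0 (I : Type) (s : seq I) (P : pred I) (F : I -> R) :
  Rle R0 (\big[Rmax/R0]_(i <- s | P i) F i).
Proof.
elim/big_rec: _ => [|i x _ hx]; first exact: Rle_refl.
exact: Rle_trans hx (Rmax_r _ _).
Qed.

Lemma bigmax_le (I : Type) (s : seq I) (P : pred I) (F : I -> R) (B : R) :
  Rle R0 B -> (forall i, P i -> Rle (F i) B) ->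
  Rle (\big[Rmax/R0]_(i <- s | P i) F i) B.
Proof.
move=> hB hF; elim/big_rec: _ => [//|i x Pi hx].
exact: Rmax_lub (hF i Pi) hx.
Qed.

Lemma bigmax_lt (I : Type) (s : seq I) (P : pred I) (F : I -> R) (B : R) :
  Rlt R0 B -> (forall i, P i -> Rlt (F i) B) ->
  Rlt (\big[Rmax/R0]_(i <- s | P i) F i) B.
Proof.
move=> hB hF; elim/big_rec: _ => [//|i x Pi hx].
exact: Rmax_lub_lt (hF i Pi) hx.
Qed.

Lemma le_bigmax (I : eqType) (s : seq I) (P : pred I) (F : I -> R) i :
  i \in s -> P i -> Rle (F i) (\big[Rmax/R0]_(j <- s | P j) F j).
Proof.
elim: s => [//|x s IH]; rewrite inE big_cons => /orP [/eqP <-|ins] Pi.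
  by rewrite Pi; apply: Rmax_l.
case: ifP => _; last exact: IH.
exact: Rle_trans (IH ins Pi) (Rmax_r _ _).
Qed.

Lemma bigmax_attained (I : eqType) (s : seq I) (P : pred I) (F : I -> R) :
  \big[Rmax/R0]_(j <- s | P j) F j = R0 \/
  exists i, [/\ i \in s, P i & \big[Rmax/R0]_(j <- s | P j) F j = F i].
Proof.
elim: s => [|x s IH]; first by left; rewrite big_nil.
rewrite big_cons; case: ifP => Px; last first.
  case: IH => [->|[i [ins Pi ->]]]; [by left|right; exists i; by rewrite inE ins orbT].
unfold Rmax; case: Rle_dec => _.
  case: IH => [->|[i [ins Pi ->]]]; first by left.
  by right; exists i; rewrite inE ins orbT.
right; exists x; by rewrite inE eqxx.
Qed.

Lemma Rmax_div (x y B : R) : Rlt R0 B ->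
  Rdiv (Rmax (Rmult x B) y) B = Rmax x (Rdiv y B).
Proof.
move=> hB.
have -> : y = Rmult B (Rdiv y B) by field; lra.
rewrite Rmult_comm RmaxRmult; last lra.
have -> : Rdiv (Rmult B (Rdiv y B)) B = Rdiv y B by field; lra.
field; lra.
Qed.

Lemma diam_calc (x rho B : R) : Rlt R0 B -> Rlt R0 rho -> Rle R0 x ->
  Rmax (Rmax (Rmult x B) rho) B = R1 ->
  Rdiv (Rdiv rho B) (pow (Rmax R1 (Rmax x (Rdiv rho B))) 2) = Rmult rho B.
Proof.
move=> hB hr hx h.
have e : Rmax (Rmax (Rmult x B) rho) B = Rmult B (Rmax R1 (Rmax x (Rdiv rho B))).
  rewrite -RmaxRmult; last lra.
  rewrite -RmaxRmult; last lra.
  have -> : Rmult B (Rdiv rho B) = rho by field; lra.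
  by rewrite Rmult_1_r (Rmult_comm B x) Rmax_comm.
rewrite h in e.
have -> : Rmax R1 (Rmax x (Rdiv rho B)) = Rinv B.
  apply: (Rmult_eq_reg_l B); last lra.
  by rewrite -e Rinv_r //; lra.
field; lra.
Qed.

Lemma frac_pi (R : idomainType) (r : {ratio R}) :
  (\pi_({fraction R}))%qT r = (\n_r)%:F / (\d_r)%:F.
Proof.
have hd : \d_r != 0 by exact: denom_ratioP.
apply: (@mulIf _ (\d_r)%:F); first by rewrite tofrac_eq0.
rewrite mulfVK ?tofrac_eq0 //.
unlock FracField.tofrac.
transitivity ((\pi_({fraction R}))%qT (FracField.mulf r (Ratio \d_r 1))).
  by rewrite FracField.pi_mul.
apply/eqmodP => /=. rewrite FracField.equivfE /=.
rewrite /FracField.mulf !numden_Ratio ?oner_neq0 ?mulf_neq0 ?oner_neq0 //.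
by rewrite !mulr1 mulrC.
Qed.

Lemma frac_repr (R : idomainType) (x : {fraction R}) :
  x = (\n_(repr x))%:F / (\d_(repr x))%:F.
Proof. by rewrite -frac_pi reprK. Qed.
Section AbsL.
Variable K : fieldType.
Variable abs : K -> R.
Hypothesis Habs : nonarch_abs abs.

Lemma abs_ge0 x : Rle R0 (abs x). Proof. by case: Habs. Qed.
Lemma abs_eq0 x : abs x = R0 <-> x = 0. Proof. by case: Habs => _ []. Qed.
Lemma absM x y : abs (x * y) = Rmult (abs x) (abs y). Proof. by case: Habs => _ [_ []]. Qed.
Lemma absD x y : Rle (abs (x + y)) (Rmax (abs x) (abs y)). Proof. by case: Habs => _ [_ []]. Qed.
Lemma abs0 : abs 0 = R0. Proof. by apply/abs_eq0. Qed.
Lemma abs_gt0 x : x != 0 -> Rlt R0 (abs x).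
Proof.
move=> /eqP hx; have := abs_ge0 x; case/Rle_lt_or_eq_dec => // h.
by exfalso; apply: hx; apply/abs_eq0.
Qed.
Lemma abs1 : abs 1 = R1.
Proof.
have h := absM 1 1; rewrite mulr1 in h.
have h1 := @abs_gt0 1 (oner_neq0 K).
have : Rmult (abs 1) (Rminus (abs 1) R1) = R0 by rewrite /Rminus Rmult_plus_distr_l -h; ring.
case/Rmult_integral => h2; first lra. lra.
Qed.
Lemma absN x : abs (- x) = abs x.
Proof.
have h := absM (-1) (-1); rewrite mulrNN mulr1 abs1 in h.
have h1 : abs (-1) = R1.
  have h0 := abs_ge0 (-1); nra.
by rewrite -mulN1r absM h1 Rmult_1_l.
Qed.
Lemma absB x y : Rle (abs (x - y)) (Rmax (abs x) (abs y)).
Proof. by rewrite -(absN y); apply: absD. Qed.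
Lemma absBC x y : abs (x - y) = abs (y - x).
Proof. by rewrite -absN opprB. Qed.
Lemma abs_strict x y : Rlt (abs y) (abs x) -> abs (x + y) = abs x.
Proof.
move=> h; have h1 := absD x y.
have h2 := absB (x + y) y; rewrite addrK in h2.
apply: Rle_antisym.
  by apply: Rle_trans h1 _; apply: Rmax_lub; lra.
move: h2; unfold Rmax at 1; case: Rle_dec; lra.
Qed.

Lemma abs_sum_le (I : Type) (s : seq I) (P : pred I) (F : I -> K) (t B : R) :
  Rlt R0 t -> Rle R0 B -> (forall i, P i -> Rle (Rmult (abs (F i)) t) B) ->
  Rle (Rmult (abs (\sum_(i <- s | P i) F i)) t) B.
Proof.
move=> ht hB hF; elim/big_rec: _ => [|i x Pi hx]; first by rewrite abs0; lra.
have h := absD (F i) x; have hi := hF i Pi.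
apply: Rle_trans (Rmult_le_compat_r _ _ _ (Rlt_le _ _ ht) h) _.
unfold Rmax; case: Rle_dec => _; lra.
Qed.

Lemma abs_sum_lt (I : Type) (s : seq I) (P : pred I) (F : I -> K) (t B : R) :
  Rlt R0 t -> Rlt R0 B -> (forall i, P i -> Rlt (Rmult (abs (F i)) t) B) ->
  Rlt (Rmult (abs (\sum_(i <- s | P i) F i)) t) B.
Proof.
move=> ht hB hF; elim/big_rec: _ => [|i x Pi hx]; first by rewrite abs0; lra.
have h := absD (F i) x; have hi := hF i Pi.
apply: Rle_lt_trans (Rmult_le_compat_r _ _ _ (Rlt_le _ _ ht) h) _.
unfold Rmax; case: Rle_dec => _; lra.
Qed.

Definition term (r : R) (p : {poly K}) (i : nat) : R := Rmult (abs p`_i) (pow r i).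
Definition wn (r : R) (p : {poly K}) : R := \big[Rmax/R0]_(i < size p) term r p i.

Lemma term_ge0 (r : R) (p : {poly K}) i : Rle R0 r -> Rle R0 (term r p i).
Proof. move=> hr; apply: Rmult_le_pos; [exact: abs_ge0|exact: pow_le]. Qed.

Lemma term_le_wn (r : R) (p : {poly K}) k : Rle R0 r -> Rle (term r p k) (wn r p).
Proof.
move=> hr; case: (ltnP k (size p)) => hk.
  have := @le_bigmax _ (index_enum 'I_(size p)) xpredT (fun i : 'I_(size p) => term r p i) (Ordinal hk).
  by apply; rewrite ?mem_index_enum.
rewrite /term nth_default // abs0 Rmult_0_l.
exact: bigmax_ge0.
Qed.

Lemma wn_le (r : R) (p : {poly K}) B : Rle R0 B -> (forall k, Rle (term r p k) B) -> Rle (wn r p) B.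
Proof. by move=> hB h; apply: bigmax_le. Qed.

Lemma wn_ge0 (r : R) (p : {poly K}) : Rle R0 (wn r p).
Proof. exact: bigmax_ge0. Qed.

Lemma wn_ext (r : R) (p : {poly K}) n : Rle R0 r -> (size p <= n)%N ->
  \big[Rmax/R0]_(i < n) term r p i = wn r p.
Proof.
move=> hr hn; apply: Rle_antisym.
  by apply: bigmax_le => [|i _]; [exact: wn_ge0|exact: term_le_wn].
apply: wn_le => [|k]; first exact: bigmax_ge0.
case: (ltnP k n) => hk.
  have := @le_bigmax _ (index_enum 'I_n) xpredT (fun i : 'I_n => term r p i) (Ordinal hk).
  by apply; rewrite ?mem_index_enum.
rewrite /term nth_default ?abs0 ?Rmult_0_l; last exact: leq_trans hn hk.
exact: bigmax_ge0.
Qed.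

Lemma wn0 r : wn r 0 = R0.
Proof. by rewrite /wn size_poly0 big_ord0. Qed.

Lemma wn_gt0 (r : R) (p : {poly K}) : Rlt R0 r -> p != 0 -> Rlt R0 (wn r p).
Proof.
move=> hr hp; apply: Rlt_le_trans (@term_le_wn r p (size p).-1 (Rlt_le _ _ hr)).
apply: Rmult_lt_0_compat; last exact: pow_lt.
apply: abs_gt0 => //. by rewrite -lead_coefE lead_coef_eq0.
Qed.

Lemma wn_attained (r : R) (p : {poly K}) : Rlt R0 r -> p != 0 -> exists i, wn r p = term r p i.
Proof.
move=> hr hp; case: (@bigmax_attained _ (index_enum 'I_(size p)) xpredT
  (fun i : 'I_(size p) => term r p i)).
  by move=> h; have := @wn_gt0 r p hr hp; rewrite /wn h; lra.
by case=> i [_ _ h]; exists i.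
Qed.


Lemma wn_minidx (r : R) (p : {poly K}) : Rlt R0 r -> p != 0 ->
  exists i, wn r p = term r p i /\ forall j, (j < i)%N -> Rlt (term r p j) (wn r p).
Proof.
move=> hr hp; have hr0 := Rlt_le _ _ hr.
have [i hi] := @wn_attained r p hr hp.
pose P := fun j => if Req_EM_T (term r p j) (wn r p) then true else false.
have hP : exists n, P n by exists i; rewrite /P; case: Req_EM_T => // h; exfalso; apply: h.
case: (ex_minnP hP) => m Pm hmin; exists m; split.
  by move: Pm; rewrite /P; case: Req_EM_T.
move=> j hj; have := @term_le_wn r p j hr0; case/Rle_lt_or_eq_dec => // heq.
have := hmin j; rewrite /P; case: Req_EM_T => // _ /(_ isT); by rewrite leqNgt hj.
Qed.

Lemma pow_split (r : R) (i k : nat) : (i <= k)%N -> pow r k = Rmult (pow r i) (pow r (k - i)).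
Proof. by move=> h; rewrite -pow_add; congr pow; apply/esym; apply: subnKC. Qed.

Lemma wnM (r : R) (p q : {poly K}) : Rlt R0 r -> wn r (p * q) = Rmult (wn r p) (wn r q).
Proof.
move=> hr; have hr0 := Rlt_le _ _ hr.
have [->|hp] := eqVneq p 0; first by rewrite mul0r !wn0 Rmult_0_l.
have [->|hq] := eqVneq q 0; first by rewrite mulr0 !wn0 Rmult_0_r.
have Wp := @wn_gt0 r p hr hp; have Wq := @wn_gt0 r q hr hq.
apply: Rle_antisym.
  apply: wn_le => [|k]; first by apply: Rmult_le_pos; exact: wn_ge0.
  rewrite /term coefM; apply: abs_sum_le; [exact: pow_lt|by apply: Rmult_le_pos; exact: wn_ge0|].
  move=> i _; have hik : (i <= k)%N by rewrite -ltnS.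
  have -> : Rmult (abs (p`_i * q`_(k - i))) (pow r k) = Rmult (term r p i) (term r q (k - i)).
    by rewrite absM (@pow_split r i k hik) /term; ring.
  apply: Rmult_le_compat; try exact: term_ge0; exact: term_le_wn.
have [i0 [hi0 hlt0]] := @wn_minidx r p hr hp.
have [j0 [hj0 hltj]] := @wn_minidx r q hr hq.
pose k := (i0 + j0)%N.
apply: Rle_trans (@term_le_wn r (p * q) k hr0).
rewrite /term coefM.
have hik : (i0 < k.+1)%N by rewrite ltnS leq_addr.
rewrite (bigD1 (Ordinal hik)) //=.
set S := \sum_(j < k.+1 | j != Ordinal hik) _.
have hkj : (k - i0 = j0)%N by rewrite /k addKn.
have hx : Rmult (abs (p`_i0 * q`_(k - i0))) (pow r k) = Rmult (wn r p) (wn r q).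
  by rewrite hkj absM (@pow_split r i0 k (leq_addr j0 i0)) -/k hkj hi0 hj0 /term; ring.
have hS : Rlt (Rmult (abs S) (pow r k)) (Rmult (wn r p) (wn r q)).
  apply: abs_sum_lt; [exact: pow_lt|exact: Rmult_lt_0_compat|].
  move=> j hj; have hjk : (j <= k)%N by rewrite -ltnS.
  have -> : Rmult (abs (p`_j * q`_(k - j))) (pow r k) = Rmult (term r p j) (term r q (k - j)).
    by rewrite absM (@pow_split r j k hjk) /term; ring.
  have a0 := @term_ge0 r p j hr0; have b0 := @term_ge0 r q (k - j) hr0.
  have aW := @term_le_wn r p j hr0; have bW := @term_le_wn r q (k - j) hr0.
  case: (ltnP j i0) => hji.
    have := hlt0 j hji => h.
    apply: Rle_lt_trans (Rmult_le_compat_l _ _ _ a0 bW) _.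
    exact: Rmult_lt_compat_r.
  have hji' : (i0 < j)%N by rewrite ltn_neqAle hji andbT; apply: contra hj => /eqP e;
    apply/eqP; apply: val_inj; rewrite /= e.
  have hq' : (k - j < j0)%N by move: hji' hjk; rewrite /k; lia.
  have := hltj _ hq' => h.
  apply: Rle_lt_trans (Rmult_le_compat_r _ _ _ b0 aW) _.
  exact: Rmult_lt_compat_l.
have hS' : Rlt (abs S) (abs (p`_i0 * q`_(k - i0))).
  apply: (Rmult_lt_reg_r (pow r k)); [exact: pow_lt|lra].
rewrite abs_strict // hx; exact: Rle_refl.
Qed.

Lemma wnC (r : R) (k : K) : Rle R0 r -> wn r k%:P = abs k.
Proof.
move=> hr; apply: Rle_antisym.
  apply: wn_le => [|i]; first exact: abs_ge0.
  rewrite /term coefC; case: i => [|i] /=; first by rewrite Rmult_1_r; apply: Rle_refl.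
  by rewrite abs0 Rmult_0_l; apply: abs_ge0.
by have := @term_le_wn r k%:P 0 hr; rewrite /term coefC /= Rmult_1_r.
Qed.

Lemma coefXC (e : K) i : ('X + e%:P)`_i = if i == 0%N then e else if i == 1%N then 1 else 0.
Proof. by rewrite coefD coefX coefC; case: i => [|[|i]] /=; rewrite ?add0r ?addr0. Qed.

Lemma wnXC (r : R) (e : K) : Rlt R0 r -> wn r ('X + e%:P) = Rmax (abs e) r.
Proof.
move=> hr; have hr0 := Rlt_le _ _ hr; apply: Rle_antisym.
  apply: wn_le => [|i]; first by apply: Rle_trans (Rmax_r _ _).
  rewrite /term coefXC; case: i => [|[|i]] /=.
  - by rewrite Rmult_1_r; apply: Rmax_l.
  - by rewrite abs1 Rmult_1_l Rmult_1_r; apply: Rmax_r.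
  - by rewrite abs0 Rmult_0_l; apply: Rle_trans (Rmax_r _ _).
apply: Rmax_lub.
  by have := @term_le_wn r ('X + e%:P) 0 hr0; rewrite /term coefXC /= Rmult_1_r.
by have := @term_le_wn r ('X + e%:P) 1 hr0; rewrite /term coefXC /= abs1 Rmult_1_l Rmult_1_r.
Qed.

Lemma gauss_wn (p : {poly K}) : gauss_norm abs p = wn R1 p.
Proof. by apply: eq_bigr => i _; rewrite /term pow1 Rmult_1_r. Qed.

Lemma zeta_wn (c : K) (r : R) (f : {poly K}) : Rle R0 r ->
  zeta abs c r f = wn r (f \Po ('X + c%:P)).
Proof.
move=> hr; rewrite /zeta; apply: wn_ext => //.
by rewrite size_comp_poly2 // size_XaddC.
Qed.

Lemma zetaM (c : K) (r : R) (f g : {poly K}) : Rlt R0 r ->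
  zeta abs c r (f * g) = Rmult (zeta abs c r f) (zeta abs c r g).
Proof.
move=> hr; have hr0 := Rlt_le _ _ hr.
by rewrite !zeta_wn // comp_polyM wnM.
Qed.

Lemma zetaC (c : K) (r : R) (k : K) : Rle R0 r -> zeta abs c r k%:P = abs k.
Proof. by move=> hr; rewrite zeta_wn // comp_polyC wnC. Qed.

Lemma zetaX (c : K) (r : R) (a : K) : Rlt R0 r ->
  zeta abs c r ('X - a%:P) = Rmax (abs (c - a)) r.
Proof.
move=> hr; rewrite zeta_wn; last exact: Rlt_le.
rewrite comp_polyB comp_polyX comp_polyC -addrA -polyCB wnXC //.
Qed.

Lemma gaussF_eq (n d : {poly K}) : d != 0 ->
  gaussF abs (n%:F / d%:F) = Rdiv (wn R1 n) (wn R1 d).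
Proof.
move=> hd; rewrite /gaussF !gauss_wn.
have hr := @frac_repr _ (n%:F / d%:F).
set n0 := \n_(repr _) in hr *; set d0 := \d_(repr _) in hr *.
have hd0 : d0 != 0 := denom_ratioP _.
have : n%:F / d%:F == n0%:F / d0%:F by rewrite -hr.
rewrite eqr_div ?tofrac_eq0 // -!tofracM tofrac_eq => /eqP e.
have := congr1 (wn R1) e; rewrite !wnM; try exact: Rlt_0_1.
have b := @wn_gt0 R1 d Rlt_0_1 hd; have b0 := @wn_gt0 R1 d0 Rlt_0_1 hd0.
move=> h; rewrite /Rdiv.
apply: (Rmult_eq_reg_r (Rmult (wn R1 d) (wn R1 d0))); last first.
  by apply: Rmult_integral_contrapositive; split; lra.
have -> : Rmult (Rmult (wn R1 n0) (Rinv (wn R1 d0))) (Rmult (wn R1 d) (wn R1 d0))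
   = Rmult (wn R1 n0) (wn R1 d) by field; lra.
have -> : Rmult (Rmult (wn R1 n) (Rinv (wn R1 d))) (Rmult (wn R1 d) (wn R1 d0))
   = Rmult (wn R1 n) (wn R1 d0) by field; lra.
by rewrite h.
Qed.

Lemma gaussFM (x y : {fraction {poly K}}) :
  gaussF abs (x * y) = Rmult (gaussF abs x) (gaussF abs y).
Proof.
have ex := @frac_repr _ x; have ey := @frac_repr _ y.
have hx : \d_(repr x) != 0 := denom_ratioP _.
have hy : \d_(repr y) != 0 := denom_ratioP _.
have -> : x * y = (\n_(repr x) * \n_(repr y))%:F / (\d_(repr x) * \d_(repr y))%:F.
  by rewrite {1}ex {1}ey !tofracM mulf_div.
rewrite gaussF_eq ?mulf_neq0 // /gaussF !gauss_wn !wnM; try exact: Rlt_0_1.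
have b := @wn_gt0 R1 _ Rlt_0_1 hx; have b0 := @wn_gt0 R1 _ Rlt_0_1 hy.
rewrite /Rdiv; field; lra.
Qed.

Lemma gaussFC (k : K) : gaussF abs (k%:P)%:F = abs k.
Proof.
have -> : (k%:P)%:F = (k%:P)%:F / (1 : {poly K})%:F by rewrite tofrac1 divr1.
rewrite gaussF_eq ?oner_neq0 // !wnC; try exact: Rle_0_1.
by rewrite abs1 /Rdiv Rinv_1 Rmult_1_r.
Qed.

Definition hK : {rmorphism K -> {fraction {poly K}}} := (@FracField.tofrac _) \o polyC.

Lemma compose_horner (f : {poly K}) (phi : {fraction {poly K}}) :
  compose f phi = (map_poly hK f).[phi].
Proof.
rewrite horner_coef size_map_poly /compose; apply: eq_bigr => i _.
by rewrite coef_map.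
Qed.

Lemma pushM (phi : {fraction {poly K}}) (f g : {poly K}) :
  push_zetaG abs phi (f * g) = Rmult (push_zetaG abs phi f) (push_zetaG abs phi g).
Proof. by rewrite /push_zetaG !compose_horner rmorphM hornerM gaussFM. Qed.

Lemma pushC (phi : {fraction {poly K}}) (k : K) : push_zetaG abs phi k%:P = abs k.
Proof. by rewrite /push_zetaG compose_horner map_polyC hornerC gaussFC. Qed.

Lemma pushX (phi : {fraction {poly K}}) (a : K) :
  push_zetaG abs phi ('X - a%:P) = gaussF abs (phi - (a%:P)%:F).
Proof.
by rewrite /push_zetaG compose_horner rmorphB /= map_polyX map_polyC hornerD hornerN hornerX hornerC.
Qed.

Definition Nv (d : nat) (v : nat -> K) : R := \big[Rmax/R0]_(i < d.+1) abs (v i).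

Lemma Nv_ge0 d v : Rle R0 (Nv d v). Proof. exact: bigmax_ge0. Qed.

Lemma Nv_le (d : nat) (v : nat -> K) B : Rle R0 B -> (forall i, (i <= d)%N -> Rle (abs (v i)) B) -> Rle (Nv d v) B.
Proof. by move=> hB h; apply: bigmax_le => // i _; apply: h; rewrite -ltnS. Qed.

Lemma le_Nv (d : nat) (v : nat -> K) i : (i <= d)%N -> Rle (abs (v i)) (Nv d v).
Proof.
move=> hi; have hi' : (i < d.+1)%N by [].
have := @le_bigmax _ (index_enum 'I_d.+1) xpredT (fun i : 'I_d.+1 => abs (v i)) (Ordinal hi').
by apply; rewrite ?mem_index_enum.
Qed.

Lemma Nv_attained (d : nat) (v : nat -> K) : Nv d v = R0 \/ exists i, (i <= d)%N /\ Nv d v = abs (v i).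
Proof.
case: (@bigmax_attained _ (index_enum 'I_d.+1) xpredT (fun i : 'I_d.+1 => abs (v i))).
  by left.
by case=> i [_ _ h]; right; exists i; split => //; rewrite -ltnS.
Qed.

Lemma dehom_poly (d : nat) (v : nat -> K) : dehom d v = \poly_(i < d.+1) v i.
Proof. by rewrite poly_def. Qed.

Lemma wn_dehom (d : nat) (v : nat -> K) : wn R1 (dehom d v) = Nv d v.
Proof.
rewrite -(@wn_ext R1 _ d.+1 Rle_0_1); last by rewrite dehom_poly size_poly.
apply: eq_bigr => i _; rewrite /term dehom_poly coef_poly ltn_ord pow1 Rmult_1_r //.
Qed.

Lemma dehom_lin (d : nat) (a b : nat -> K) (al : K) :
  dehom d a - al%:P * dehom d b = dehom d (fun i => a i - al * b i).
Proof.
apply/polyP => i; rewrite coefB coefCM !dehom_poly !coef_poly.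
by case: ifP => _; rewrite ?mulr0 ?subr0.
Qed.

Lemma Nv_comb (d : nat) (u v : nat -> K) (e : K) :
  Rle (Nv d (fun i => u i + e * v i)) (Rmax (Nv d u) (Rmult (abs e) (Nv d v))).
Proof.
apply: Nv_le => [|i hi].
  by apply: Rle_trans (Rmax_l _ _); exact: Nv_ge0.
apply: Rle_trans (absD _ _) _; rewrite absM; apply: Rmax_lub.
  by apply: Rle_trans (Rmax_l _ _); exact: le_Nv.
apply: Rle_trans (Rmax_r _ _); apply: Rmult_le_compat_l; [exact: abs_ge0|exact: le_Nv].
Qed.

Lemma Nv_key d (a b : nat -> K) j (al : K) : (j <= d)%N -> abs (b j) = Nv d b -> b j != 0 ->
  Nv d (fun i => a i - al * b i) =
  Rmax (Rmult (abs (a j / b j - al)) (Nv d b)) (Nv d (fun i => a i - a j / b j * b i)).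
Proof.
move=> hj hbj bj0; set c := a j / b j.
have E1 : Nv d (fun i => (a i - c * b i) + (c - al) * b i) = Nv d (fun i => a i - al * b i).
  by apply: eq_bigr => i _; rewrite mulrBl addrA subrK.
have E2 : Nv d (fun i => (a i - al * b i) + (- (c - al)) * b i) = Nv d (fun i => a i - c * b i).
  by apply: eq_bigr => i _; rewrite mulNr mulrBl opprB addrA subrK.
have h1 := Nv_comb d (fun i => a i - c * b i) b (c - al).
have h2 := Nv_comb d (fun i => a i - al * b i) b (- (c - al)).
rewrite E1 in h1; rewrite E2 absN in h2.
have h3 : Rle (Rmult (abs (c - al)) (Nv d b)) (Nv d (fun i => a i - al * b i)).
  have := @le_Nv d (fun i => a i - al * b i) j hj.
  have -> : a j - al * b j = (c - al) * b j by rewrite mulrBl /c divfK.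
  by rewrite absM hbj.
apply: Rle_antisym.
  by move: h1; rewrite Rmax_comm.
apply: Rmax_lub => //.
move: h2; unfold Rmax at 1; case: Rle_dec => _ h; lra.
Qed.

Lemma rat_degree_const (k : K) (d : nat) : rat_degree (k%:P)%:F d -> d = 0%N.
Proof.
case=> p [q [hq [cop [e hs]]]].
have ep : p = k%:P * q.
  apply/eqP; rewrite -tofrac_eq tofracM e divfK // tofrac_eq0 //.
have sq : size q = 1%N.
  have [k0|k0] := eqVneq k 0.
    move: cop; rewrite ep k0 mul0r coprime0p => h.
    by apply/eqP; rewrite size_poly_eq1.
  move: cop; rewrite ep mul_polyC coprimepZl // coprimepp => /eqP //.
have sp : (size p <= 1)%N by rewrite ep mul_polyC -sq size_scale_leq.
by move: hs; rewrite sq (maxn_idPr sp).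
Qed.

Lemma main_aux
  (Hext : forall m1 m2 : {poly K} -> R,
     (forall f g, m1 (f * g) = Rmult (m1 f) (m1 g)) ->
     (forall f g, m2 (f * g) = Rmult (m2 f) (m2 g)) ->
     (forall k, m1 k%:P = m2 k%:P) ->
     (forall a, m1 ('X - a%:P) = m2 ('X - a%:P)) -> forall f, m1 f = m2 f)
  (phi : {fraction {poly K}}) (d : nat) (Hd : (1 <= d)%N) (Hdeg : rat_degree phi d)
  (a b : nat -> K) (Hrep : normalized_rep abs d a b phi) :
  (exists (c : K) (r : R), Rlt R0 r /\ forall f, push_zetaG abs phi f = zeta abs c r f) /\
  (forall (c : K) (r : R), Rlt R0 r -> (forall f, push_zetaG abs phi f = zeta abs c r f) ->
     diamG abs c r = max_minor abs d a b).
Proof.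
case: Hrep => [hbd [[i1 [hi1 hone]] [_ ephi]]].
have noconst : forall k : K, phi <> (k%:P)%:F.
  move=> k ek; move: Hdeg; rewrite ek => /rat_degree_const hd0.
  by rewrite hd0 in Hd.
have Bne : dehom d b != 0.
  apply/negP => /eqP h0; apply: (noconst 0).
  by rewrite ephi h0 tofrac0 invr0 mulr0.
have Bpos : Rlt R0 (Nv d b) by rewrite -wn_dehom; exact: wn_gt0 Rlt_0_1 Bne.
have [hB0|[j [hj hBj]]] := Nv_attained d b; first by exfalso; lra.
have bj0 : b j != 0.
  by apply/eqP => h; rewrite h abs0 in hBj; lra.
set B := Nv d b in Bpos hBj.
set c := a j / b j.
set rho := Nv d (fun i => a i - c * b i).
have key : forall al, Nv d (fun i => a i - al * b i) = Rmax (Rmult (abs (c - al)) B) rho.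
  by move=> al; apply: Nv_key.
have rho_pos : Rlt R0 rho.
  case: (Rle_lt_or_eq_dec _ _ (Nv_ge0 d (fun i => a i - c * b i))) => // h0.
  exfalso; apply: (noconst c).
  have e0 : dehom d a - c%:P * dehom d b = 0.
    rewrite dehom_lin dehom_poly; apply/polyP => i; rewrite coef_poly coef0.
    case: ifP => hi //; apply/abs_eq0; apply: Rle_antisym; last exact: abs_ge0.
    by rewrite /rho in h0; rewrite h0; apply: le_Nv; rewrite -ltnS.
  rewrite ephi.
  have -> : dehom d a = c%:P * dehom d b by apply/eqP; rewrite -subr_eq0 e0.
  by rewrite tofracM mulfK // tofrac_eq0.
set r := Rdiv rho B.
have r_pos : Rlt R0 r by apply: Rdiv_lt_0_compat.
have pX : forall al, push_zetaG abs phi ('X - al%:P) = Rmax (abs (c - al)) r.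
  move=> al; rewrite pushX ephi.
  have -> : (dehom d a)%:F / (dehom d b)%:F - (al%:P)%:F
         = (dehom d a - al%:P * dehom d b)%:F / (dehom d b)%:F.
    by rewrite tofracB tofracM mulrBl mulfK // tofrac_eq0.
  rewrite gaussF_eq // dehom_lin !wn_dehom key -/B.
  by rewrite Rmax_div.
have Hall : forall f, push_zetaG abs phi f = zeta abs c r f.
  apply: Hext => [f g|f g|k|al]; first exact: pushM.
  - exact: zetaM.
  - by rewrite pushC zetaC //; apply: Rlt_le.
  - by rewrite pX zetaX.
split; first by exists c, r.
move=> c' r' hr' H'.
have E : forall al, Rmax (abs (c - al)) r = Rmax (abs (c' - al)) r'.
  move=> al; rewrite -(@zetaX c r al r_pos) -(@zetaX c' r' al hr').
  by transitivity (push_zetaG abs phi ('X - al%:P)); [rewrite Hall|exact: H'].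
have E1 := E c; have E2 := E c'.
rewrite subrr abs0 in E1; rewrite subrr abs0 in E2.
rewrite (Rmax_right _ _ (Rlt_le _ _ r_pos)) in E1.
rewrite (Rmax_right _ _ (Rlt_le _ _ hr')) in E2.
have hcc : Rle (abs (c - c')) r.
  by rewrite E1 absBC; apply: Rmax_l.
have rr : r' = r.
  apply: Rle_antisym; first by rewrite E1; apply: Rmax_r.
  by rewrite -E2; apply: Rmax_r.
have cc : Rmax (abs c') r = Rmax (abs c) r.
  have h1 : Rle (abs c') (Rmax (abs c) (abs (c' - c))).
    by have := absD c (c' - c); rewrite addrC subrK.
  have h2 : Rle (abs c) (Rmax (abs c') (abs (c - c'))).
    by have := absD c' (c - c'); rewrite addrC subrK.
  rewrite absBC in h1.
  apply: Rle_antisym; apply: Rmax_lub; try exact: Rmax_r.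
    apply: Rle_trans h1 _; apply: Rmax_lub; [exact: Rmax_l|exact: Rle_trans hcc (Rmax_r _ _)].
  apply: Rle_trans h2 _; apply: Rmax_lub; [exact: Rmax_l|exact: Rle_trans hcc (Rmax_r _ _)].
rewrite /diamG rr cc.
have Na : Nv d a = Rmax (Rmult (abs c) B) rho.
  rewrite -[c]subr0 -key; apply: eq_bigr => i _; by rewrite mul0r subr0.
have norm1 : Rmax (Rmax (Rmult (abs c) B) rho) B = R1.
  rewrite -Na; apply: Rle_antisym.
    apply: Rmax_lub; apply: Nv_le => [|i hi]; try lra.
      by case: (hbd i hi).
    by case: (hbd i hi).
  case: hone => h1.
    by apply: Rle_trans (Rmax_l _ _); rewrite -h1; apply: le_Nv.
  by apply: Rle_trans (Rmax_r _ _); rewrite -h1; apply: le_Nv.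
rewrite /r (@diam_calc (abs c) rho B Bpos rho_pos (abs_ge0 c) norm1).
set a' := fun i => a i - c * b i.
have minor : forall i k, a i * b k - a k * b i = a' i * b k - a' k * b i.
  move=> i k; rewrite /a' !mulrBl -!mulrA [b i * b k]mulrC opprB addrA subrK //.
have B0 : Rle R0 B by lra.
apply: Rle_antisym; last first.
  apply: bigmax_le => [|i _]; first by apply: Rmult_le_pos; lra.
  apply: bigmax_le => [|k _]; first by apply: Rmult_le_pos; lra.
  have hi : (i <= d)%N by rewrite -ltnS ltn_ord.
  have hk : (k <= d)%N by rewrite -ltnS ltn_ord.
  rewrite minor; apply: Rle_trans (absB _ _) _; apply: Rmax_lub; rewrite absM;
    (apply: Rmult_le_compat; [exact: abs_ge0|exact: abs_ge0| |]); apply: le_Nv => //.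
have [h0|[i0 [hi0 hrho]]] := Nv_attained d a'.
  by exfalso; rewrite -/rho in h0; lra.
rewrite -/rho in hrho.
have a'j : a' j = 0 by rewrite /a' /c divfK // subrr.
have nij : i0 != j by apply/eqP => e; rewrite e a'j abs0 in hrho; lra.
have hi0' : (i0 < d.+1)%N by rewrite ltnS.
have hj' : (j < d.+1)%N by rewrite ltnS.
pose o1 : 'I_d.+1 := Ordinal hi0'; pose o2 : 'I_d.+1 := Ordinal hj'.
have ne : o1 != o2 by [].
have outer := @le_bigmax _ (index_enum 'I_d.+1) xpredT
  (fun i : 'I_d.+1 => \big[Rmax/R0]_(k < d.+1 | i != k) abs (a i * b k - a k * b i)) o1
  (mem_index_enum _) isT.
have inner := @le_bigmax _ (index_enum 'I_d.+1) (fun k : 'I_d.+1 => o1 != k)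
  (fun k : 'I_d.+1 => abs (a o1 * b k - a k * b o1)) o2 (mem_index_enum _) ne.
rewrite /max_minor. have T := Rle_trans _ _ _ inner outer.
apply: (Rle_trans _ _ _ _ T).
rewrite /o1 /o2 /= minor a'j mul0r subr0 absM -hrho hBj; exact: Rle_refl.
Qed.

End AbsL.

Lemma mult_ext (K : closedFieldType) (m1 m2 : {poly K} -> R) :
  (forall f g, m1 (f * g) = Rmult (m1 f) (m1 g)) ->
  (forall f g, m2 (f * g) = Rmult (m2 f) (m2 g)) ->
  (forall k, m1 k%:P = m2 k%:P) ->
  (forall a, m1 ('X - a%:P) = m2 ('X - a%:P)) -> forall f, m1 f = m2 f.
Proof.
move=> M1 M2 C X f; have [rs ->] := closed_field_poly_normal f.
rewrite -mul_polyC M1 M2 C; congr Rmult.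
elim: rs => [|z rs IH]; first by rewrite big_nil -polyC1 C.
by rewrite big_cons M1 M2 X IH.
Qed.

Theorem proposition4p4 (K : closedFieldType) (abs : K -> R)
  (Habs : nonarch_abs abs) (Hnontriv : nontrivial_abs abs) (Hcompl : complete_abs abs)
  (phi : {fraction {poly K}}) (d : nat) (Hd : (1 <= d)%N) (Hdeg : rat_degree phi d)
  (a b : nat -> K) (Hrep : normalized_rep abs d a b phi) :
  (exists (c : K) (r : R), Rlt R0 r /\ forall f, push_zetaG abs phi f = zeta abs c r f) /\
  (forall (c : K) (r : R), Rlt R0 r -> (forall f, push_zetaG abs phi f = zeta abs c r f) ->
     diamG abs c r = max_minor abs d a b).
Proof.
exact: (@main_aux K abs Habs (@mult_ext K) phi d Hd Hdeg a b Hrep).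
Qed.
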